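(* Let $X$ be a real Hilbert space, let $\lambda>0$, and let $f\colon X\to\mathbb R$ be Fréchet differentiable with $\nabla f$ Lipschitz continuous with constant $1/\lambda$ (and, as standing assumption, $f(x)\ge-\alpha\|x\|^2-\beta\|x\|+\nu$ for all $x$ for some $\nu,\beta\in\mathbb R$, $\alpha\ge0$). Then: (i) $\mathrm{Id}+\lambda\nabla f$ is maximally monotone; (ii) $f$ is $\tfrac1\lambda$-hypoconvex; (iii) $f+\tfrac{1}{2\lambda}\|\cdot\|^2$ is convex; (iv) for every $\mu\in]0,\lambda[$, $\operatorname{Prox}_{\mu f}$ is single-valued; (v) for every $\mu\in]0,\lambda[$, $\operatorname{Prox}_{\mu f}$ is $\tfrac{\lambda-\mu}{\lambda}$-cocoercive; (vi) for every $\mu\in]0,\lambda[$, $\operatorname{Prox}_{\mu f}=J_{\mu\hat\partial f}=(\mathrm{Id}+\mu\nabla f)^{-1}$; (vii) for every $\mu\in]0,\lambda[$, $\mathrm{Id}-\operatorname{Prox}_{\mu f}$ is $\tfrac{\lambda}{2(\lambda-\mu)}$-conically nonexpansive.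
   Context: $\operatorname{Prox}_{\mu f}(x)=\operatorname{argmin}_{y\in X}\big(f(y)+\tfrac{1}{2\mu}\|x-y\|^2\big)$; $J_B=(\mathrm{Id}+B)^{-1}$. $\hat\partial$ denotes any abstract subdifferential, i.e., a rule satisfying: equals the convex subdifferential on proper lsc convex functions; equals $\nabla g$ for continuously differentiable $g$; $0\in\hat\partial g(x)$ at local minimizers $x$; $\hat\partial(g+\beta\|\cdot-x\|^2/2)=\hat\partial g+\beta(\mathrm{Id}-x)$ for all $\beta\in\mathbb R$ (so here $\hat\partial f=\nabla f$). $f$ is $\tfrac1\lambda$-hypoconvex if $f((1-\tau)x+\tau y)\le(1-\tau)f(x)+\tau f(y)+\tfrac{1}{2\lambda}\tau(1-\tau)\|x-y\|^2$ for all $x,y$, $\tau\in]0,1[$. $S$ is $\gamma$-cocoercive if $\langle x-y,Sx-Sy\rangle\ge\gamma\|Sx-Sy\|^2$ for all $x,y$. $T$ is $\alpha$-conically nonexpansive ($\alpha>0$) if $T=(1-\alpha)\mathrm{Id}+\alpha N$ for some nonexpansive $N\colon X\to X$. *)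

(* Defs.v *)
(* real Hilbert space = complete normed module over a
   realType R whose norm comes from an inner product. *)
From HB Require Import structures.
From mathcomp Require Import all_boot all_order all_algebra.
From mathcomp Require Import all_classical all_reals all_analysis.
Set Implicit Arguments. Unset Strict Implicit. Unset Printing Implicit Defensive.
Import Order.TTheory GRing.Theory Num.Theory.
Import numFieldNormedType.Exports.
Local Open Scope classical_set_scope.
Local Open Scope ring_scope.

Section Defs.
Context {R : realType} {V : normedModType R}.

Definition inner_product_for (ip : V -> V -> R) : Prop :=
  [/\ forall x y, ip x y = ip y x,
      forall (a : R) x y z, ip (a *: x + y) z = a * ip x z + ip y z
    & forall x, ip x x = `|x| ^+ 2].

Definition is_gradient (ip : V -> V -> R) (f : V -> R) (g : V -> V) : Prop :=
  forall x, differentiable f x /\ forall h, ('d f x : V -> R) h = ip (g x) h.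

Definition monotone_op (ip : V -> V -> R) (A : V -> set V) : Prop :=
  forall x y u v, A x u -> A y v -> 0 <= ip (x - y) (u - v).

Definition maximally_monotone (ip : V -> V -> R) (A : V -> set V) : Prop :=
  monotone_op ip A /\
  forall B : V -> set V, monotone_op ip B ->
    (forall x u, A x u -> B x u) -> forall x u, B x u -> A x u.

Definition hypoconvex (lam : R) (f : V -> R) : Prop :=
  forall x y (tau : R), 0 < tau < 1 ->
    f ((1 - tau) *: x + tau *: y) <=
      (1 - tau) * f x + tau * f y + (2 * lam)^-1 * tau * (1 - tau) * `|x - y| ^+ 2.

Definition convex_fun (f : V -> R) : Prop :=
  forall x y (tau : R), 0 < tau < 1 ->
    f ((1 - tau) *: x + tau *: y) <= (1 - tau) * f x + tau * f y.

Definition prox (mu : R) (f : V -> R) (x : V) : set V :=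
  [set y | forall z, f y + (2 * mu)^-1 * `|x - y| ^+ 2 <=
                     f z + (2 * mu)^-1 * `|x - z| ^+ 2].

Definition single_valued (A : V -> set V) : Prop :=
  forall x, exists! y, A x y.

Definition op_inverse (A : V -> set V) : V -> set V :=
  fun x => [set y | A y x].

Definition resolvent (A : V -> set V) : V -> set V :=
  op_inverse (fun y => [set y + u | u in A y]).

Definition cocoercive (ip : V -> V -> R) (gam : R) (S : V -> V) : Prop :=
  forall x y, gam * `|S x - S y| ^+ 2 <= ip (x - y) (S x - S y).

Definition nonexpansive (N : V -> V) : Prop :=
  forall x y, `|N x - N y| <= `|x - y|.

Definition conically_nonexpansive (alpha : R) (T : V -> V) : Prop :=
  exists N : V -> V, nonexpansive N /\
    forall x, T x = (1 - alpha) *: x + alpha *: N x.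

End Defs.

(* Main.v *)
Require Import Defs.
From HB Require Import structures.
From mathcomp Require Import all_boot all_order all_algebra.
From mathcomp Require Import all_classical all_reals all_analysis.
From mathcomp Require Import ring lra.
Import Order.TTheory GRing.Theory Num.Theory.
Import numFieldNormedType.Exports.
Local Open Scope classical_set_scope.
Local Open Scope ring_scope.
Set Implicit Arguments. Unset Strict Implicit.
Set Implicit Arguments. Unset Strict Implicit.
Lemma ip0l (R : realType) (V : normedModType R) (ip : V -> V -> R) :
  inner_product_for ip -> forall z, ip 0 z = 0.
Proof.
case=> _ L _ z. have := L 1 0 0 z. rewrite scaler0 addr0 mul1r => E.
by apply: (@addrI _ (ip 0 z)); rewrite addr0 -E.
Qed.

Lemma ipDl (R : realType) (V : normedModType R) (ip : V -> V -> R) :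
  inner_product_for ip -> forall x y z, ip (x + y) z = ip x z + ip y z.
Proof. by case=> _ L _ x y z; rewrite -[x]scale1r L mul1r scale1r. Qed.

Lemma ipZl (R : realType) (V : normedModType R) (ip : V -> V -> R) :
  inner_product_for ip -> forall a x z, ip (a *: x) z = a * ip x z.
Proof.
move=> H a x z; have := H; case=> _ L _.
by rewrite -[a *: x]addr0 L (ip0l H) addr0.
Qed.

Lemma ipNl (R : realType) (V : normedModType R) (ip : V -> V -> R) :
  inner_product_for ip -> forall x z, ip (- x) z = - ip x z.
Proof. by move=> H x z; rewrite -scaleN1r (ipZl H) mulN1r. Qed.

Lemma ipBl (R : realType) (V : normedModType R) (ip : V -> V -> R) :
  inner_product_for ip -> forall x y z, ip (x - y) z = ip x z - ip y z.
Proof. by move=> H x y z; rewrite (ipDl H) (ipNl H). Qed.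

Lemma ipC (R : realType) (V : normedModType R) (ip : V -> V -> R) :
  inner_product_for ip -> forall x y, ip x y = ip y x.
Proof. by case. Qed.

Lemma ipDr (R : realType) (V : normedModType R) (ip : V -> V -> R) :
  inner_product_for ip -> forall x y z, ip z (x + y) = ip z x + ip z y.
Proof. by move=> H x y z; rewrite !(ipC H z) (ipDl H). Qed.

Lemma ipZr (R : realType) (V : normedModType R) (ip : V -> V -> R) :
  inner_product_for ip -> forall a x z, ip z (a *: x) = a * ip z x.
Proof. by move=> H a x z; rewrite !(ipC H z) (ipZl H). Qed.

Lemma ipNr (R : realType) (V : normedModType R) (ip : V -> V -> R) :
  inner_product_for ip -> forall x z, ip z (- x) = - ip z x.
Proof. by move=> H x z; rewrite !(ipC H z) (ipNl H). Qed.

Lemma ipBr (R : realType) (V : normedModType R) (ip : V -> V -> R) :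
  inner_product_for ip -> forall x y z, ip z (x - y) = ip z x - ip z y.
Proof. by move=> H x y z; rewrite !(ipC H z) (ipBl H). Qed.

Lemma ipxx (R : realType) (V : normedModType R) (ip : V -> V -> R) :
  inner_product_for ip -> forall x, ip x x = `|x| ^+ 2.
Proof. by case. Qed.

Lemma normD2 (R : realType) (V : normedModType R) (ip : V -> V -> R) :
  inner_product_for ip -> forall x y, `|x + y| ^+ 2 = `|x| ^+ 2 + 2 * ip x y + `|y| ^+ 2.
Proof.
move=> H x y; rewrite -!(ipxx H) (ipDl H) !(ipDr H) (ipC H y x); ring.
Qed.

Lemma normB2 (R : realType) (V : normedModType R) (ip : V -> V -> R) :
  inner_product_for ip -> forall x y, `|x - y| ^+ 2 = `|x| ^+ 2 - 2 * ip x y + `|y| ^+ 2.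
Proof.
move=> H x y; rewrite (normD2 H) (ipNr H) normrN; ring.
Qed.

Lemma cauchy_schwarz (R : realType) (V : normedModType R) (ip : V -> V -> R) :
  inner_product_for ip -> forall x y, ip x y <= `|x| * `|y|.
Proof.
move=> H x y.
have [y0|ypos] := eqVneq `|y| 0.
  move/normr0_eq0: y0 => ->; rewrite (ipC H) (ip0l H) normr0 mulr0 //.
have [x0|xpos] := eqVneq `|x| 0.
  move/normr0_eq0: x0 => ->; rewrite (ip0l H) normr0 mul0r //.
have : 0 <= `|(`|y| *: x - `|x| *: y)| ^+ 2 by rewrite exprn_ge0.
rewrite (normB2 H) (ipZl H) (ipZr H) !normrZ !normr_id.
have yp : 0 < `|y| by rewrite lt_def ypos normr_ge0.
have xp : 0 < `|x| by rewrite lt_def xpos normr_ge0.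
move=> h2.
have : (`|y| * `|x|) * ip x y <= (`|y| * `|x|) * (`|x| * `|y|) by nra.
by rewrite ler_pM2l ?mulr_gt0.
Qed.

Lemma cauchy_schwarzN (R : realType) (V : normedModType R) (ip : V -> V -> R) :
  inner_product_for ip -> forall x y, - (`|x| * `|y|) <= ip x y.
Proof.
move=> H x y; rewrite lerNl -(ipNl H); have := cauchy_schwarz H (- x) y.
by rewrite normrN.
Qed.

Lemma line_derive (R : realType) (V : normedModType R) (f : V -> R) (y d : V) (t : R) :
  differentiable f (y + t *: d) ->
  is_derive t 1 (fun s => f (y + s *: d)) ('d f (y + t *: d) d).
Proof.
move=> df.
have E : (fun h : R => h^-1 *: (((fun s => f (y + s *: d)) \o shift t) (h *: 1) - f (y + t *: d)))
   = (fun h : R => h^-1 *: ((f \o shift (y + t *: d)) (h *: d) - f (y + t *: d))).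
  apply/funext => h /=. congr (_ *: (f _ - _)).
  by rewrite /shift /= scaler1 scalerDl addrCA addrA [_ + y]addrC -addrA.
have hd : derivable f (y + t *: d) d by exact: diff_derivable.
apply: DeriveDef.
  by rewrite /derivable E.
by rewrite /derive E -deriveE.
Qed.

Lemma lower_bound (R : realType) (V : normedModType R) (ip : V -> V -> R) f g (lam : R) :
  inner_product_for ip -> 0 < lam -> is_gradient ip f g ->
  (forall x y, `|g x - g y| <= lam^-1 * `|x - y|) ->
  forall y z, f y + ip (g y) (z - y) - (2 * lam)^-1 * `|z - y| ^+ 2 <= f z.
Proof.
move=> H lam0 Hg Lg y z.
set d := z - y.
set a := (2 * lam)^-1 * `|d| ^+ 2.
set b := ip (g y) d.
pose F := fun s : R => f (y + s *: d).
pose phi : R -> R := F + a \*: ((@id R : R -> R) ^+ 2) - b \*: (@id R : R -> R).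
pose dphi := fun t : R => ip (g (y + t *: d)) d + a *: ((2%:R * id t ^+ 1) *: 1) - b *: 1.
have Dphi : forall t : R, is_derive t (1 : R) phi (dphi t).
  move=> t; rewrite /phi /dphi /=.
  apply: is_deriveB. apply: is_deriveD.
  case: (Hg (y + t *: d)) => dif eq.
  rewrite -eq; exact: line_derive.
have [c c01 E] := @MVT R phi dphi 0 1 ltr01 (fun x _ => Dphi x)
  (derivable_within_continuous (fun x _ => match Dphi x with DeriveDef h _ => h end)).
have : 0 <= dphi c.
  have sA : forall x : R, x%:A = x by move=> x; rewrite -[RHS]mulr1.
  have sM : forall x w : R, x *: w = x * w by [].
  rewrite /dphi /= !sA sM expr1.
  have e := ipBl H (g (y + c *: d)) (g y) d.
  have c0 : 0 < c by move: c01; rewrite in_itv /= => /andP [].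
  have L := Lg (y + c *: d) y.
  rewrite addrAC subrr add0r normrZ (gtr0_norm c0) in L.
  have CS := cauchy_schwarzN H (g (y + c *: d) - g y) d.
  have : `|g (y + c *: d) - g y| * `|d| <= lam^-1 * (c * `|d|) * `|d|.
    by apply: ler_wpM2r.
  rewrite /a /b.
  have -> : (2 * lam)^-1 = lam^-1 / 2 by rewrite invfM mulrC.
  move=> h1.
  have : 0 <= lam^-1 by rewrite invr_ge0 ltW.
  nra.
move=> h; have : 0 <= phi 1 - phi 0 by rewrite E subr0 mulr1.
rewrite subr_ge0.
have ev : forall s, phi s = f (y + s *: d) + a * s ^+ 2 - b * s by [].
rewrite !ev scale0r scale1r addr0 expr0n expr1n /= !mulr0 !mulr1 subr0 addr0 /d subrKC.
rewrite /a /b /d; lra.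
Qed.
Lemma fixed_exists (R : realType) (V : completeNormedModType R) (G : V -> V) (q : R) :
  0 <= q -> q < 1 -> (forall a b, `|G a - G b| <= q * `|a - b|) -> exists p, p = G p.
Proof.
move=> q0 q1 L.
have ctr : is_contraction (totalfun_ [set: V] G : {fun [set: V] >-> [set: V]}).
  exists (NngNum q0); split => //.
  by case=> a b _ /=; exact: L.
have [p _ Hp] := @banach_fixed_point R V [set: V] _ ctr closedT (ex_intro _ 0 I).
by exists p.
Qed.

Lemma prox_ineq (R : realType) (V : normedModType R) (ip : V -> V -> R) f g (lam mu : R) :
  inner_product_for ip -> 0 < lam -> is_gradient ip f g ->
  (forall x y, `|g x - g y| <= lam^-1 * `|x - y|) -> 0 < mu ->
  forall x y z, y + mu *: g y = x ->
  f y + (2 * mu)^-1 * `|x - y| ^+ 2 + ((2 * mu)^-1 - (2 * lam)^-1) * `|z - y| ^+ 2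
    <= f z + (2 * mu)^-1 * `|x - z| ^+ 2.
Proof.
move=> H lam0 Hg Lg mu0 x y z E.
have lb := lower_bound H lam0 Hg Lg y z.
have exz : x - z = (x - y) + (- (z - y)) by rewrite opprB addrA subrK.
have exy : x - y = mu *: g y by rewrite -E addrAC subrr add0r.
have n2 : `|x - z| ^+ 2 = `|x - y| ^+ 2 - 2 * (mu * ip (g y) (z - y)) + `|z - y| ^+ 2.
  by rewrite exz (normD2 H) normrN (ipNr H) exy (ipZl H) mulrN.
rewrite n2.
have : (2 * mu)^-1 * (2 * (mu * ip (g y) (z - y))) = ip (g y) (z - y).
  by field; rewrite gt_eqF.
lra.
Qed.

Lemma sol_unique (R : realType) (V : normedModType R) (g : V -> V) (lam mu : R) :
  0 < lam -> (forall x y, `|g x - g y| <= lam^-1 * `|x - y|) -> 0 < mu -> mu < lam ->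
  forall x y p, y + mu *: g y = x -> p + mu *: g p = x -> y = p.
Proof.
move=> lam0 Lg mu0 mul x y p Ey Ep.
have e : y - p = mu *: (g p - g y).
  have h : y = x - mu *: g y by rewrite -Ey addrK.
  have h' : p = x - mu *: g p by rewrite -Ep addrK.
  by rewrite {1}h {1}h' scalerBr opprB addrC addrA subrK.
have : `|y - p| <= mu / lam * `|y - p|.
  rewrite {1}e normrZ gtr0_norm // -mulrA; apply: ler_wpM2l; first exact: ltW.
  by rewrite distrC; apply: Lg.
have : mu / lam < 1 by rewrite ltr_pdivrMr // mul1r.
move=> h1 h2.
have : `|y - p| <= 0 by nra.
by move=> h; apply/eqP; rewrite -subr_eq0 -normr_le0.
Qed.

Lemma inv_gap (R : realType) (lam mu : R) : 0 < mu -> mu < lam ->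
  0 < (2 * mu)^-1 - (2 * lam)^-1.
Proof.
move=> mu0 mul; rewrite subr_gt0 ltf_pV2 ?posrE ?mulr_gt0 //; last exact: lt_trans mul.
by rewrite ltr_pM2l.
Qed.

Lemma fixed_sol (R : realType) (V : completeNormedModType R) (g : V -> V) (lam mu : R) :
  0 < lam -> (forall x y, `|g x - g y| <= lam^-1 * `|x - y|) -> 0 < mu -> mu < lam ->
  forall x, exists p, p + mu *: g p = x.
Proof.
move=> lam0 Lg mu0 mul x.
have q1 : mu / lam < 1 by rewrite ltr_pdivrMr // mul1r.
have [|p Hp] := @fixed_exists R V (fun p => x - mu *: g p) (mu / lam)
  (divr_ge0 (ltW mu0) (ltW lam0)) q1 _.
  move=> a b; rewrite opprB addrC addrA subrK -scalerBr normrZ gtr0_norm //.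
  by rewrite -mulrA; apply: ler_wpM2l; [exact: ltW | rewrite distrC; apply: Lg].
by exists p; rewrite {1}Hp subrK.
Qed.

Lemma prox_char (R : realType) (V : completeNormedModType R) (ip : V -> V -> R) f g (lam mu : R) :
  inner_product_for ip -> 0 < lam -> is_gradient ip f g ->
  (forall x y, `|g x - g y| <= lam^-1 * `|x - y|) -> 0 < mu -> mu < lam ->
  forall x y, prox mu f x y <-> y + mu *: g y = x.
Proof.
move=> H lam0 Hg Lg mu0 mul x y; split.
  move=> Hy.
  have [p Ep] := fixed_sol lam0 Lg mu0 mul x.
  have I := prox_ineq H lam0 Hg Lg mu0 y Ep.
  have J := Hy p.
  have c0 := inv_gap mu0 mul.
  have : `|y - p| ^+ 2 <= 0.
    have : ((2 * mu)^-1 - (2 * lam)^-1) * `|y - p| ^+ 2 <= 0 by lra.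
    by rewrite pmulr_rle0.
  move=> h2; have h3 := normr_ge0 (y - p).
  have : `|y - p| <= 0 by nra.
  by rewrite normr_le0 subr_eq0 => /eqP ->.
move=> Ey z.
have I := prox_ineq H lam0 Hg Lg mu0 z Ey.
have c0 := inv_gap mu0 mul.
have : 0 <= ((2 * mu)^-1 - (2 * lam)^-1) * `|z - y| ^+ 2.
  apply: mulr_ge0; [exact: ltW | exact: sqr_ge0].
lra.
Qed.

Lemma part_i (R : realType) (V : normedModType R) (ip : V -> V -> R) (g : V -> V) (lam : R) :
  inner_product_for ip -> 0 < lam ->
  (forall x y, `|g x - g y| <= lam^-1 * `|x - y|) ->
  maximally_monotone ip (fun x => [set x + lam *: g x]).
Proof.
move=> H lam0 Lg.
have key : forall x y,
   `|(x + lam *: g x) - (y + lam *: g y)| <= 2 * `|x - y| /\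
   0 <= ip (x - y) ((x + lam *: g x) - (y + lam *: g y)).
  move=> x y.
  have e : (x + lam *: g x) - (y + lam *: g y) = (x - y) + lam *: (g x - g y).
    by rewrite scalerBr opprD !addrA [x + _ - y]addrAC.
  have Lxy := Lg x y.
  have n1 : `|lam *: (g x - g y)| <= `|x - y|.
    rewrite normrZ gtr0_norm //.
    have := ler_wpM2l (ltW lam0) Lxy. by rewrite mulrA mulfV ?gt_eqF // mul1r.
  have n2 : `|(x + lam *: g x) - (y + lam *: g y)| <= 2 * `|x - y|.
    by rewrite e; apply: (le_trans (ler_normD _ _)); lra.
  split => //.
  rewrite e (ipDr H) (ipxx H).
  have cs := cauchy_schwarzN H (x - y) (lam *: (g x - g y)).
  have := normr_ge0 (x - y).
  nra.
split.
  move=> x y u v -> ->. by case: (key x y).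
move=> B monB AB x u Bxu.
pose w := x + lam *: g x - u.
pose y := x - 4^-1 *: w.
have Byv := AB y _ erefl.
have m := monB x y u _ Bxu Byv.
have exy : x - y = 4^-1 *: w by rewrite /y opprB addrC subrK.
rewrite exy (ipZl H) in m.
have m' : 0 <= ip w (u - (y + lam *: g y)).
  by move: m; rewrite pmulr_rge0 // invr_gt0.
have eu : u - (y + lam *: g y) = - w + ((x + lam *: g x) - (y + lam *: g y)).
  by rewrite /w opprB [RHS]addrA subrK.
rewrite eu (ipDr H) (ipNr H) (ipxx H) in m'.
case: (key x y) => n2 _.
rewrite exy normrZ gtr0_norm ?invr_gt0 // in n2.
have cs := cauchy_schwarz H w ((x + lam *: g x) - (y + lam *: g y)).
have w0 := normr_ge0 w.
have : `|w| <= 0 by nra.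
rewrite normr_le0 subr_eq0 => /eqP ->. by [].
Qed.

Lemma convE (R : realType) (V : normedModType R) (t : R) (x y : V) :
  (1 - t) *: x + t *: y = x + t *: (y - x).
Proof. by rewrite scalerBl scale1r scalerBr addrA addrAC. Qed.

Lemma part_ii (R : realType) (V : normedModType R) (ip : V -> V -> R) f g (lam : R) :
  inner_product_for ip -> 0 < lam -> is_gradient ip f g ->
  (forall x y, `|g x - g y| <= lam^-1 * `|x - y|) ->
  hypoconvex lam f.
Proof.
move=> H lam0 Hg Lg x y tau /andP [t0 t1].
rewrite convE.
set w := x + tau *: (y - x).
have l1 := lower_bound H lam0 Hg Lg w x.
have l2 := lower_bound H lam0 Hg Lg w y.
have e1 : x - w = tau *: (x - y).
  by rewrite /w opprD addrA subrr add0r -scalerN opprB.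
have e2 : y - w = (1 - tau) *: (y - x).
  by rewrite /w opprD addrA scalerBl scale1r.
rewrite e1 (ipZr H) normrZ gtr0_norm // in l1.
rewrite e2 (ipZr H) normrZ gtr0_norm ?subr_gt0 // -(opprB x y) (ipNr H) normrN in l2.
set P := ip (g w) (x - y) in l1 l2.
set N := `|x - y| in l1 l2 *.
set k := (2 * lam)^-1 in l1 l2 *.
have k0 : 0 <= k by rewrite invr_ge0 mulr_ge0 // ltW.
have t1' : 0 <= 1 - tau by rewrite subr_ge0 ltW.
have a := ler_wpM2l t1' l1.
have b := ler_wpM2l (ltW t0) l2.
nra.
Qed.

Lemma part_iii (R : realType) (V : normedModType R) (ip : V -> V -> R) f g (lam : R) :
  inner_product_for ip -> 0 < lam -> is_gradient ip f g ->
  (forall x y, `|g x - g y| <= lam^-1 * `|x - y|) ->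
  convex_fun (fun x => f x + (2 * lam)^-1 * `|x| ^+ 2).
Proof.
move=> H lam0 Hg Lg x y tau tt.
have hc := part_ii H lam0 Hg Lg x y tt.
case/andP: tt => t0 t1.
have t1' : 0 < 1 - tau by rewrite subr_gt0.
have n : `|(1 - tau) *: x + tau *: y| ^+ 2 =
   (1 - tau) ^+ 2 * `|x| ^+ 2 + 2 * ((1 - tau) * tau * ip x y) + tau ^+ 2 * `|y| ^+ 2.
  rewrite (normD2 H) (ipZl H) (ipZr H) !normrZ !gtr0_norm // !exprMn; congr (_ + _ * _ + _).
  by rewrite mulrA.
have m := normB2 H x y.
rewrite /= n.
set k := (2 * lam)^-1 in hc *.
rewrite m in hc.
nra.
Qed.

Unset Implicit Arguments.

Theorem corollary6p5 (R : realType) (V : completeNormedModType R)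
  (ip : V -> V -> R) (f : V -> R) (g : V -> V) (lam : R) :
  inner_product_for ip ->
  0 < lam ->
  is_gradient ip f g ->
  (forall x y, `|g x - g y| <= lam^-1 * `|x - y|) ->
  (exists (alpha beta nu : R), 0 <= alpha /\
     forall x, - alpha * `|x| ^+ 2 - beta * `|x| + nu <= f x) ->
  maximally_monotone ip (fun x => [set x + lam *: g x]) /\
  hypoconvex lam f /\
  convex_fun (fun x => f x + (2 * lam)^-1 * `|x| ^+ 2) /\
      (forall mu, 0 < mu < lam -> single_valued (prox mu f)) /\
      (forall mu, 0 < mu < lam -> forall P : V -> V,
         (forall x, prox mu f x = [set P x]) ->
         cocoercive ip ((lam - mu) / lam) P) /\
      (forall mu, 0 < mu < lam ->
         prox mu f = resolvent (fun y => [set mu *: g y]) /\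
         prox mu f = op_inverse (fun y => [set y + mu *: g y])) /\
      (forall mu, 0 < mu < lam -> forall P : V -> V,
         (forall x, prox mu f x = [set P x]) ->
         conically_nonexpansive (lam / (2 * (lam - mu))) (fun x => x - P x)).
Proof.
move=> H lam0 Hg Lg _.
split; first exact: part_i.
split; first exact: (part_ii H lam0 Hg Lg).
split; first exact: (part_iii H lam0 Hg Lg).
have EPf : forall mu, 0 < mu -> mu < lam -> forall P : V -> V,
   (forall x, prox mu f x = [set P x]) -> forall z, P z + mu *: g (P z) = z.
  move=> mu mu0 mul P HP z.
  by apply/(prox_char H lam0 Hg Lg mu0 mul); rewrite HP.
have coco : forall mu, 0 < mu -> mu < lam -> forall P : V -> V,
   (forall x, prox mu f x = [set P x]) -> cocoercive ip ((lam - mu) / lam) P.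
  move=> mu mu0 mul P HP x y.
  have ex := EPf mu mu0 mul P HP x.
  have ey := EPf mu mu0 mul P HP y.
  have e : x - y = (P x - P y) + mu *: (g (P x) - g (P y)).
    by rewrite -{1}ex -{1}ey scalerBr opprD !addrA [P x + _ - P y]addrAC.
  rewrite e (ipDl H) (ipZl H) (ipxx H).
  have cs := cauchy_schwarzN H (g (P x) - g (P y)) (P x - P y).
  have L := Lg (P x) (P y).
  have h1 := ler_wpM2r (normr_ge0 (P x - P y)) L.
  have h2 : mu * (- (`|g (P x) - g (P y)| * `|P x - P y|)) <= mu * ip (g (P x) - g (P y)) (P x - P y).
    by apply: ler_wpM2l; [exact: ltW | exact: cs].
  have := normr_ge0 (P x - P y).
  have := normr_ge0 (g (P x) - g (P y)).
  have -> : (lam - mu) / lam = 1 - mu * lam^-1 by field; rewrite gt_eqF.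
  have : 0 < lam^-1 by rewrite invr_gt0.
  nra.
split.
  move=> mu /andP [mu0 mul] x.
  have [p Ep] := fixed_sol lam0 Lg mu0 mul x.
  exists p; split; first by apply/(prox_char H lam0 Hg Lg mu0 mul).
  move=> y /(prox_char H lam0 Hg Lg mu0 mul) Ey.
  exact: (sol_unique lam0 Lg mu0 mul Ep Ey).
split.
  by move=> mu /andP [mu0 mul]; exact: coco.
split.
  move=> mu /andP [mu0 mul]; split; apply/funext => x; apply/seteqP; split => y /=.
  - move/(prox_char H lam0 Hg Lg mu0 mul) => Ey.
    by rewrite /resolvent /op_inverse /=; exists (mu *: g y).
  - rewrite /resolvent /op_inverse /= => -[u -> Ey].
    by apply/(prox_char H lam0 Hg Lg mu0 mul).
  - move/(prox_char H lam0 Hg Lg mu0 mul) => Ey.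
    by rewrite /op_inverse /= Ey.
  - rewrite /op_inverse /= => Ey.
    by apply/(prox_char H lam0 Hg Lg mu0 mul).
move=> mu /andP [mu0 mul] P HP.
have cc := coco mu mu0 mul P HP.
set gam := (lam - mu) / lam in cc *.
have gam0 : 0 <= gam by apply: divr_ge0; [rewrite subr_ge0; exact: ltW | exact: ltW].
exists (fun x => x - (2 * gam) *: P x); split.
  move=> x y.
  have e : x - (2 * gam) *: P x - (y - (2 * gam) *: P y) = (x - y) - (2 * gam) *: (P x - P y).
    by rewrite scalerBr !opprD addrACA.
  rewrite e.
  have n := normB2 H (x - y) ((2 * gam) *: (P x - P y)).
  have c0 : 0 <= 2 * gam by rewrite mulr_ge0.
  rewrite (ipZr H) normrZ (ger0_norm c0) in n.
  have c := cc x y.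
  have a0 := normr_ge0 (x - y - (2 * gam) *: (P x - P y)).
  have b0 := normr_ge0 (x - y).
  have : `|x - y - (2 * gam) *: (P x - P y)| ^+ 2 <= `|x - y| ^+ 2.
    rewrite n.
    have := ler_wpM2l gam0 c.
    nra.
  nra.
move=> x.
have ac : lam / (2 * (lam - mu)) * (2 * gam) = 1.
  rewrite /gam; field.
  by rewrite !gt_eqF // subr_gt0.
rewrite scalerBr scalerA ac scale1r addrA -scalerDl subrK scale1r //.
Qed.
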